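(* Suppose QEPmin is in the hard case, and let $(\lambda_*,z_* )$ be a minimizer of QEPmin with $b_0^{\top}z_*=0$. Then: (1) $\lambda_*=\lambda_{\min}(H)$, the smallest eigenvalue of $H$; (2) $g_0\perp\mathcal U$, where $\mathcal U$ is the eigenspace of $H$ associated with $\lambda_{\min}(H)$; (3) $b_0\perp\mathcal V$, where $\mathcal V$ is the eigenspace of $PAP$ associated with its eigenvalue $\lambda_{\min}(H)\in\operatorname{eig}(PAP)$.
   Context: Let $A\in\mathbb{R}^{n\times n}$ be symmetric, $C\in\mathbb{R}^{n\times m}$ ($m<n$) full column rank, $b\in\mathbb{R}^m$, $n_0=C(C^{\top}C)^{-1}b$ with $\|n_0\|<1$, $\gamma=\sqrt{1-\|n_0\|^2}$, $P=I-C(C^{\top}C)^{-1}C^{\top}$ (orthogonal projector onto $\mathcal N(C^{\top})$), $b_0=PAn_0$, assumed nonzero. Let $S_1\in\mathbb{R}^{n\times(n-m)}$ have orthonormal columns spanning $\mathcal N(C^{\top})$, $H=S_1^{\top}AS_1$, $g_0=S_1^{\top}b_0$. QEPmin: minimize $\lambda$ over pairs $(\lambda,z)$ with $\lambda\in\mathbb{R}$, $0\neq z\in\mathcal N(C^{\top})$ and $(PAP-\lambda I)^2z=\gamma^{-2}b_0b_0^{\top}z$. QEPmin is in the hard case if it has a minimizer $(\lambda_*,z_* )$ with $b_0^{\top}z_*=0$; otherwise in the easy case. *)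

(* Defs.v *)
From HB Require Import structures.
From mathcomp Require Import all_boot all_order all_algebra.
Set Implicit Arguments. Unset Strict Implicit. Unset Printing Implicit Defensive.
Import Order.TTheory GRing.Theory Num.Theory.
Local Open Scope ring_scope.

Section QEP.
Variables (R : rcfType) (n m : nat).
Variables (A : 'M[R]_n) (C : 'M[R]_(n, m)) (b : 'cV[R]_m).

Definition vnorm (k : nat) (v : 'cV[R]_k) : R := Num.sqrt ((v^T *m v) 0 0).

Definition n0 : 'cV[R]_n := C *m invmx (C^T *m C) *m b.
Definition gam : R := Num.sqrt (1 - vnorm n0 ^+ 2).
Definition Pproj : 'M[R]_n := 1%:M - C *m invmx (C^T *m C) *m C^T.
Definition b0 : 'cV[R]_n := Pproj *m A *m n0.
Definition PAP : 'M[R]_n := Pproj *m A *m Pproj.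

Definition QEP_feasible (lam : R) (z : 'cV[R]_n) : Prop :=
  [/\ z != 0, C^T *m z = 0 &
      (PAP - lam%:M) *m (PAP - lam%:M) *m z = gam ^-2 *: (b0 *m b0^T *m z)].

Definition QEP_minimizer (lam : R) (z : 'cV[R]_n) : Prop :=
  QEP_feasible lam z /\
  forall lam' z', QEP_feasible lam' z' -> lam <= lam'.

End QEP.

Definition is_lambda_min (R : rcfType) (k : nat) (M : 'M[R]_k) (l : R) : Prop :=
  eigenvalue M l /\ forall mu, eigenvalue M mu -> l <= mu.

(* Main.v *)
Require Import Defs.
From HB Require Import structures.
From mathcomp Require Import all_boot all_order all_algebra.
From mathcomp Require Import ring lra.
Set Implicit Arguments. Unset Strict Implicit. Unset Printing Implicit Defensive.
Import Order.TTheory GRing.Theory Num.Theory.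
Local Open Scope ring_scope.

Section Dot.
Variable R : rcfType.

Definition dot k (u v : 'cV[R]_k) : R := (u^T *m v) 0 0.

Lemma dotE k (u v : 'cV[R]_k) : dot u v = \sum_i u i 0 * v i 0.
Proof. by rewrite /dot mxE; apply: eq_bigr => i _; rewrite mxE. Qed.

Lemma dotC k (u v : 'cV[R]_k) : dot u v = dot v u.
Proof. by rewrite !dotE; apply: eq_bigr => i _; rewrite mulrC. Qed.

Lemma dot_ge0 k (u : 'cV[R]_k) : 0 <= dot u u.
Proof. by rewrite dotE; apply: sumr_ge0 => i _; rewrite -expr2 sqr_ge0. Qed.

Lemma dot_eq0 k (u : 'cV[R]_k) : dot u u = 0 -> u = 0.
Proof.
rewrite dotE => /psumr_eq0P H; apply/matrixP => i j.
rewrite (ord1 j) mxE; apply/eqP; rewrite -sqrf_eq0 expr2 H //.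
by move=> l _; rewrite -expr2 sqr_ge0.
Qed.

Lemma dot_lin k (u v : 'cV[R]_k) t :
  dot (v - t *: u) (v - t *: u) = dot v v - 2 * t * dot u v + t ^+ 2 * dot u u.
Proof.
rewrite !dotE.
have -> : \sum_i (v - t *: u) i 0 * (v - t *: u) i 0 =
  \sum_i (v i 0 * v i 0 - (2 * t) * (u i 0 * v i 0) + t ^+ 2 * (u i 0 * u i 0)).
  by apply: eq_bigr => i _; rewrite !mxE; ring.
by rewrite big_split /= sumrB -!mulr_sumr.
Qed.

Lemma CS k (u v : 'cV[R]_k) : dot u v ^+ 2 <= dot u u * dot v v.
Proof.
have [uu0|uu0] := eqVneq (dot u u) 0.
  by rewrite (dot_eq0 uu0) /dot trmx0 !mul0mx !mxE expr0n /= mul0r.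
have uup : 0 < dot u u by rewrite lt_def uu0 dot_ge0.
have := dot_ge0 (v - (dot u v / dot u u) *: u); rewrite dot_lin.
set a := dot u v; set p := dot u u; set q := dot v v => h.
have e : q - 2 * (a / p) * a + (a / p) ^+ 2 * p = (p * q - a ^+ 2) / p.
  by field; rewrite /p.
rewrite e ler_pdivlMr // mul0r subr_ge0 in h.
by [].
Qed.

Lemma trmx_dot k (M : 'M[R]_k) (u v : 'cV[R]_k) :
  dot u (M *m v) = dot (M^T *m u) v.
Proof. by rewrite /dot trmx_mul trmxK mulmxA. Qed.

Lemma mx11_eq0 (M : 'M[R]_1) : (M == 0) = (M 0 0 == 0).
Proof.
apply/idP/idP => /eqP h; apply/eqP; first by rewrite h mxE.
by rewrite [M]mx11_scalar h raddf0.
Qed.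

Lemma det_rank1 k (u : 'M[R]_(k,1)) (v : 'M[R]_(1,k)) :
  \det (1%:M + u *m v) = 1 + (v *m u) 0 0.
Proof.
pose L := block_mx (1%:M : 'M[R]_k) 0 v (1%:M : 'M_1).
pose U := block_mx (1%:M + u *m v) u 0 (1%:M : 'M_1).
pose Rm := block_mx (1%:M : 'M[R]_k) 0 (-v) (1%:M : 'M_1).
have e : L *m U *m Rm = block_mx 1%:M u 0 (1%:M + v *m u).
  rewrite /L /U /Rm !mulmx_block !mul1mx !mul0mx !mulmx0 !mulmx1 !addr0 !add0r.
  rewrite !mulmxN !mulmxDr !mulmxDl !mulmx1 !mulmxA.
  congr block_mx.
  - by rewrite addrK.
  - by rewrite mul1mx [v + _]addrC subrr.
  - by rewrite addrC.
have := congr1 determinant e.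
rewrite !det_mulmx det_lblock det_ublock det_lblock det_ublock !det1 !mul1r !mulr1.
by move=> ->; rewrite det_mx11 !mxE.
Qed.

Lemma dotBr k (u v w : 'cV[R]_k) : dot u (v - w) = dot u v - dot u w.
Proof. by rewrite /dot mulmxBr !mxE. Qed.
Lemma dotZr k (u v : 'cV[R]_k) a : dot u (a *: v) = a * dot u v.
Proof. by rewrite /dot -scalemxAr mxE. Qed.
Lemma dotZl k (u v : 'cV[R]_k) a : dot (a *: u) v = a * dot u v.
Proof. by rewrite dotC dotZr dotC. Qed.
Lemma dot0r k (u : 'cV[R]_k) : dot u 0 = 0.
Proof. by rewrite /dot mulmx0 mxE. Qed.

Section Key.
Variables (k : nat) (H : 'M[R]_k) (g : 'cV[R]_k) (c : R).
Hypothesis sH : H^T = H.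
Hypothesis c_gt0 : 0 < c.

Definition Nm (l : R) := (H - l%:M) *m (H - l%:M) - c *: (g *m g^T).

Lemma detN_inv (M : 'M[R]_k) : M \in unitmx -> M^T = M ->
  \det (M *m M - c *: (g *m g^T)) =
  \det M ^+ 2 * (1 - c * dot (invmx M *m g) (invmx M *m g)).
Proof.
move=> uM sM; set x := invmx M *m g.
have Mx : M *m x = g by rewrite /x mulKVmx.
clearbody x.
have xM : x^T *m M = g^T by rewrite -Mx trmx_mul sM.
have e : M *m M - c *: (g *m g^T) = M *m (1%:M + (- c *: x) *m x^T) *m M.
  rewrite mulmxDr mulmx1 mulmxDl -scalemxAl -scalemxAr -scalemxAl.
  by rewrite mulmxA Mx -mulmxA xM scaleNr.
rewrite e !det_mulmx det_rank1 -scalemxAr mxE -/(dot x x).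
by rewrite expr2; ring.
Qed.

Lemma sym_shift l : (H - l%:M)^T = H - l%:M.
Proof. by rewrite linearB /= tr_scalar_mx sH. Qed.

Lemma unit_shift l : ~~ eigenvalue H l -> H - l%:M \in unitmx.
Proof.
move=> ne; rewrite unitmxE unitfE; apply: contra ne => /det0P [v v0 vM].
apply/eigenvalueP; exists v => //.
by move: vM; rewrite mulmxBr mul_mx_scalar => /eqP; rewrite subr_eq0 => /eqP.
Qed.

Lemma psi_neg (w : 'cV[R]_k) (nu l1 : R) : H *m w = nu *: w ->
  dot w g != 0 -> l1 < nu -> ~~ eigenvalue H l1 ->
  (nu - l1) ^+ 2 * dot w w <= c * dot w g ^+ 2 -> \det (Nm l1) <= 0.
Proof.
move=> Hw a0 lt ne hb.
set M := H - l1%:M.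
have uM : M \in unitmx by apply: unit_shift.
have sM : M^T = M by apply: sym_shift.
have s0 : nu - l1 != 0 by rewrite subr_eq0 gt_eqF.
have Mw : M *m w = (nu - l1) *: w by rewrite mulmxBl Hw mul_scalar_mx scalerBl.
have iMw : invmx M *m w = (nu - l1)^-1 *: w.
  by rewrite -{1}[w](scalerK s0) -scalemxAr -Mw mulKmx.
set x := invmx M *m g.
have dwx : dot w x = (nu - l1)^-1 * dot w g.
  by rewrite /x trmx_dot trmx_inv sM iMw dotZl.
have hcs := CS w x.
rewrite /Nm -/M detN_inv // -/x.
apply: mulr_ge0_le0; first by rewrite sqr_ge0.
rewrite subr_le0.
move: hcs; rewrite dwx.
set s := nu - l1; set a := dot w g; set W := dot w w; set X := dot x x => hcs.
have sp : 0 < s by rewrite subr_gt0.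
have h1 : a ^+ 2 <= s ^+ 2 * (W * X).
  have -> : a ^+ 2 = (s^-1 * a) ^+ 2 * s ^+ 2 by field.
  by rewrite mulrC ler_wpM2l // sqr_ge0.
have a2 : 0 < a ^+ 2 by rewrite lt_def sqrf_eq0 a0 sqr_ge0.
have X0 : 0 <= X by apply: dot_ge0.
have h2 : s ^+ 2 * W * X <= c * a ^+ 2 * X by rewrite ler_wpM2r.
have h3 : a ^+ 2 * 1 <= a ^+ 2 * (c * X).
  apply: (le_trans _ (le_trans h2 _)).
    by rewrite mulr1 -mulrA.
  by rewrite le_eqVlt; apply/orP; left; apply/eqP; ring.
by rewrite ler_pM2l in h3.
Qed.


Definition Kb := \sum_i \sum_j `|H i j|.

Lemma coord_le (x : 'cV[R]_k) i : x i 0 ^+ 2 <= dot x x.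
Proof.
rewrite dotE (bigD1 i) //= -expr2 lerDl.
by apply: sumr_ge0 => j _; rewrite -expr2 sqr_ge0.
Qed.

Lemma Kbound (x : 'cV[R]_k) : - (Kb * dot x x) <= dot x (H *m x).
Proof.
have hi := coord_le x; set X := dot x x in hi *.
rewrite dotE /Kb mulr_suml -sumrN; apply: ler_sum => i _.
rewrite mxE mulr_sumr mulr_suml -sumrN; apply: ler_sum => j _.
have hj := hi j; have {hi} hi := hi i.
have hij : `|x i 0 * x j 0| <= X.
  rewrite normrM.
  have e1 : `|x i 0| ^+ 2 = x i 0 ^+ 2 by rewrite real_normK // num_real.
  have e2 : `|x j 0| ^+ 2 = x j 0 ^+ 2 by rewrite real_normK // num_real.
  rewrite -e1 in hi; rewrite -e2 in hj.
  have := normr_ge0 (x i 0); have := normr_ge0 (x j 0).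
  set p := `|x i 0| in hi *; set q := `|x j 0| in hj *.
  nra.
have : `|x i 0 * (H i j * x j 0)| <= `|H i j| * X.
  by rewrite mulrCA normrM ler_wpM2l.
by move/lerNnormlW.
Qed.

Lemma psi_pos (l0 : R) : 1 <= - l0 - Kb -> c * dot g g <= - l0 - Kb ->
  0 <= \det (Nm l0).
Proof.
move=> t1 tg; set t := - l0 - Kb in t1 tg.
set M := H - l0%:M.
have sM : M^T = M by apply: sym_shift.
have pd : forall y, t * dot y y <= dot y (M *m y).
  move=> y; rewrite /M mulmxBl mul_scalar_mx dotBr dotZr.
  have := Kbound y; rewrite /t; lra.
have uM : M \in unitmx.
  rewrite unitmxE unitfE; apply/negP => /det0P [v v0 vM].
  have My : M *m v^T = 0 by rewrite -{1}sM -trmx_mul vM trmx0.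
  have := pd v^T; rewrite My dot0r => h.
  have yy : dot v^T v^T = 0.
    apply/eqP; rewrite eq_le dot_ge0 andbT.
    have := dot_ge0 v^T; nra.
  by move/negP: v0; apply; rewrite -trmx_eq0 (dot_eq0 yy).
rewrite /Nm -/M detN_inv //.
apply: mulr_ge0; first by rewrite sqr_ge0.
set x := invmx M *m g.
have Mx : M *m x = g by rewrite /x mulKVmx.
clearbody x.
have h1 := pd x; rewrite Mx in h1.
have h2 := CS x g.
have X0 := dot_ge0 x; have G0 := dot_ge0 g.
rewrite subr_ge0.
set X := dot x x in h1 h2 X0 *; set G := dot g g in h2 G0 tg; set d := dot x g in h1 h2.
have [->|Xp] := eqVneq X 0; first by rewrite mulr0 ler01.
have Xp' : 0 < X by rewrite lt_def Xp X0.
have h3 : (t * X) ^+ 2 <= d ^+ 2.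
  rewrite ler_sqr ?h1 // ?nnegrE; last by apply: (le_trans _ h1); rewrite mulr_ge0 // (le_trans ler01 t1).
  by rewrite mulr_ge0 // (le_trans ler01 t1).
have h4 : t ^+ 2 * X <= G.
  have : X * (t ^+ 2 * X) <= X * G.
    rewrite (_ : X * (t ^+ 2 * X) = (t * X) ^+ 2); last by ring.
    exact: le_trans h3 h2.
  by rewrite ler_pM2l.
have h5 : c * (t ^+ 2 * X) <= t by apply: le_trans tg; rewrite ler_wpM2l // ltW.
have h6 : (c * X) * t <= 1.
  have tp : 0 < t by apply: lt_le_trans t1.
  rewrite -(ler_pM2r tp) mul1r (_ : c * X * t * t = c * (t ^+ 2 * X)) //; ring.
have cX0 : 0 <= c * X by rewrite mulr_ge0 // ltW.
apply: le_trans h6; rewrite ler_peMr //.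
Qed.

Definition psi : {poly R} :=
  \det ((map_mx polyC H - 'X%:M) *m (map_mx polyC H - 'X%:M)
         - map_mx polyC (c *: (g *m g^T))).

Lemma psiE l : psi.[l] = \det (Nm l).
Proof.
rewrite -horner_evalE /psi -det_map_mx; congr (\det _).
have hc : forall p q (B : 'M[R]_(p, q)), map_mx (horner_eval l) (map_mx polyC B) = B.
  by move=> p q B; apply/matrixP => i j; rewrite !mxE horner_evalE hornerC.
by rewrite map_mxB map_mxM map_mxB map_scalar_mx /= horner_evalE hornerX !hc.
Qed.

Lemma key (w : 'cV[R]_k) (nu : R) : H *m w = nu *: w -> dot w g != 0 ->
  exists l, l < nu /\ exists2 y : 'cV[R]_k, y != 0 & Nm l *m y = 0.
Proof.
move=> Hw a0.
set a := dot w g in a0.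
have w0 : w != 0 by apply: contra a0 => /eqP wz; rewrite /a wz dotC dot0r.
set W := dot w w.
have Wp : 0 < W.
  rewrite lt_def dot_ge0 andbT; apply: contra w0 => /eqP h.
  by rewrite (dot_eq0 h).
have a2 : 0 < a ^+ 2 by rewrite lt_def sqrf_eq0 a0 sqr_ge0.
set e := Num.min 1 (c * a ^+ 2 / W).
have ep : 0 < e by rewrite lt_min ltr01 /= divr_gt0 // mulr_gt0.
have e1 : e <= 1 by rewrite ge_min lexx.
have e2 : e * W <= c * a ^+ 2 by rewrite -ler_pdivlMr // ge_min lexx orbT.
set p := char_poly H.
have p0 : p != 0 by apply: monic_neq0; apply: char_poly_monic.
pose s (i : nat) := nu - e / (i.+1)%:R.
pose rs := map s (iota 0 (size p)).
have : ~~ all (root p) rs.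
  apply/negP => allr.
  have urs : uniq rs.
    rewrite map_inj_uniq ?iota_uniq // => i j.
    move=> h; have : e / i.+1%:R = e / j.+1%:R by move: h; rewrite /s => /eqP; rewrite (can2_eq (subKr nu) (subKr nu)) subKr => /eqP.
    move/(mulfI (lt0r_neq0 ep))/invr_inj/eqP.
    by rewrite eqr_nat eqSS => /eqP.
  have := max_poly_roots p0 allr urs.
  by rewrite size_map size_iota ltnn.
case/allPn => l1 /mapP [i _ ->] nroot.
have fp : 0 < e / (i.+1)%:R by rewrite divr_gt0.
have fe : e / (i.+1)%:R <= e.
  by rewrite ler_pdivrMr // ler_peMr ?ler1n // ltW.
have lt1 : s i < nu by rewrite /s ltrBlDr ltrDl.
have ne : ~~ eigenvalue H (s i) by rewrite eigenvalue_root_char.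
have hb : (nu - s i) ^+ 2 * W <= c * a ^+ 2.
  rewrite /s opprB addrC subrK.
  set f := e / (i.+1)%:R in fp fe *.
  apply: (le_trans _ e2); apply: ler_wpM2r; first exact: ltW.
  rewrite expr2; apply: (le_trans _ fe); apply: ler_piMl; first exact: ltW.
  exact: le_trans fe e1.
have neg := psi_neg Hw a0 lt1 ne hb.
set l0 := Num.min (s i) (- Kb - 1 - c * dot g g).
have l0le : l0 <= s i by rewrite ge_min lexx.
have l0le2 : l0 <= - Kb - 1 - c * dot g g by rewrite ge_min lexx orbT.
have gg0 := dot_ge0 g.
have cg0 : 0 <= c * dot g g by rewrite mulr_ge0 // ltW.
have pos : 0 <= \det (Nm l0) by apply: psi_pos; lra.
have [x /andP [x0 x1] rx] : exists2 x, l0 <= x <= s i & root (- psi) x.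
  by apply: poly_ivt => //; rewrite !hornerN !psiE oppr_le0 oppr_ge0 pos neg.
exists x; split; first by apply: le_lt_trans lt1.
move: rx; rewrite rootN /root psiE -det_tr => /det0P [v v0 vN].
exists v^T; first by rewrite trmx_eq0.
by rewrite -[Nm x]trmxK -trmx_mul vN trmx0.
Qed.

End Key.
End Dot.

Theorem theorem2p11 (R : rcfType) (n m : nat)
  (A : 'M[R]_n) (C : 'M[R]_(n, m)) (b : 'cV[R]_m) (S1 : 'M[R]_(n, n - m))
  (lam_s : R) (z_s : 'cV[R]_n) :
  (m < n)%N ->
  A^T = A ->
  \rank C = m ->
  vnorm (n0 C b) < 1 ->
  b0 A C b != 0 ->
  S1^T *m S1 = 1%:M ->
  (S1^T == kermx C)%MS ->
  QEP_minimizer A C b lam_s z_s ->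
  (b0 A C b)^T *m z_s = 0 ->
  let H := S1^T *m A *m S1 in
  let g0 := S1^T *m b0 A C b in
  [/\ is_lambda_min H lam_s,
      forall u : 'cV[R]_(n - m), H *m u = lam_s *: u -> g0^T *m u = 0,
      eigenvalue (PAP A C) lam_s &
      forall v : 'cV[R]_n, PAP A C *m v = lam_s *: v -> (b0 A C b)^T *m v = 0].
Proof.
move=> ltmn sA rC n0lt b00 S1S kerS [[z0 Cz zeq] zmin] bz H g0.
case/andP: kerS => kS1 kS2.
have uCC : C^T *m C \in unitmx.
  rewrite unitmxE unitfE; apply/negP => /det0P [v v0 vC].
  have h : dot (C *m v^T) (C *m v^T) = 0.
    by rewrite /dot trmx_mul trmxK mulmxA -(mulmxA v) vC mul0mx mxE.
  have vC0 : v *m C^T = 0 by rewrite -(trmxK v) -trmx_mul (dot_eq0 h) trmx0.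
  have rf : row_free C^T by rewrite /row_free mxrank_tr rC.
  by move/eqP: vC0; rewrite mulmx_free_eq0 // (negbTE v0).
set P := Pproj C.
have sP : P^T = P.
  rewrite /P /Pproj linearB /= tr_scalar_mx !trmx_mul trmxK trmx_inv trmx_mul trmxK.
  by rewrite mulmxA.
have SC : S1^T *m C = 0 by apply/sub_kermxP.
have CS1 : C^T *m S1 = 0 by rewrite -(trmxK S1) -trmx_mul SC trmx0.
have PS : P *m S1 = S1.
  by rewrite /P /Pproj mulmxBl mul1mx -(mulmxA _ C^T S1) CS1 mulmx0 subr0.
have CP : C^T *m P = 0.
  by rewrite /P /Pproj mulmxBr mulmx1 !mulmxA mulmxV // mul1mx subrr.
have PSS : P = S1 *m S1^T.
  have : (P^T <= kermx C)%MS.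
    by apply/sub_kermxP; rewrite -[X in _ *m X]trmxK -trmx_mul CP trmx0.
  move/submx_trans/(_ kS2)/submxP => [D PD].
  have PD' : P = S1 *m D^T by move: (congr1 trmx PD); rewrite trmxK trmx_mul trmxK.
  have e1 : S1 *m S1^T *m P = P.
    by rewrite PD' mulmxA -(mulmxA S1) S1S mulmx1.
  have e2 : S1 *m S1^T *m P = S1 *m S1^T.
    by apply: trmx_inj; rewrite !trmx_mul !trmxK sP mulmxA PS.
  by rewrite -e1 e2.
have SP : S1^T *m P = S1^T by rewrite -sP -trmx_mul PS.
have HS : PAP A C *m S1 = S1 *m H.
  by rewrite /PAP -/P -mulmxA PS PSS /H !mulmxA.
have bS : b0 A C b = S1 *m g0.
  by rewrite /g0 /b0 -/P !mulmxA -(mulmxA S1) SP -PSS.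
have bTS : (b0 A C b)^T *m S1 = g0^T by rewrite bS trmx_mul -mulmxA S1S mulmx1.
have sH : H^T = H by rewrite /H !trmx_mul trmxK sA mulmxA.
have sPAP : (PAP A C)^T = PAP A C by rewrite /PAP -/P !trmx_mul sP sA mulmxA.
set c := gam C b ^-2.
have c_gt0 : 0 < c.
  rewrite /c /gam invr_gt0 exprn_gt0 // sqrtr_gt0 subr_gt0.
  have v0 : 0 <= vnorm (n0 C b) by rewrite /vnorm sqrtr_ge0.
  by rewrite expr_lt1.
have shiftP : forall l, (PAP A C - l%:M) *m S1 = S1 *m (H - l%:M).
  by move=> l; rewrite mulmxBl mulmxBr HS mul_scalar_mx mul_mx_scalar.
have shift2 : forall l (y : 'cV[R]_(n - m)),
    (PAP A C - l%:M) *m (PAP A C - l%:M) *m (S1 *m y)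
    = S1 *m ((H - l%:M) *m (H - l%:M) *m y).
  move=> l y; rewrite !mulmxA -(mulmxA _ _ S1) shiftP mulmxA shiftP.
  by rewrite -!mulmxA.
have feasI : forall l (y : 'cV[R]_(n - m)), y != 0 -> Nm H g0 c l *m y = 0 ->
    QEP_feasible A C b l (S1 *m y).
  move=> l y y0 Ny; split.
  - apply: contra y0 => /eqP h.
    by rewrite -[y]mul1mx -S1S -mulmxA h mulmx0.
  - by rewrite mulmxA CS1 mul0mx.
  - rewrite shift2 -/c.
    move: Ny; rewrite /Nm mulmxBl => /eqP; rewrite subr_eq0 => /eqP ->.
    rewrite -!scalemxAl -scalemxAr; congr (_ *: _).
    by rewrite -(mulmxA _ _ (S1 *m y)) (mulmxA _ S1) bTS bS !mulmxA.
have lower : forall l (y : 'cV[R]_(n - m)), y != 0 -> Nm H g0 c l *m y = 0 ->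
    lam_s <= l.
  by move=> l y y0 Ny; apply: zmin (feasI l y y0 Ny).
have [ys zS] : exists ys : 'cV[R]_(n - m), z_s = S1 *m ys.
  have : (z_s^T <= kermx C)%MS.
    by apply/sub_kermxP; rewrite -[X in _ *m X]trmxK -trmx_mul Cz trmx0.
  move/submx_trans/(_ kS2)/submxP => [D zD].
  by exists D^T; move: (congr1 trmx zD); rewrite trmxK trmx_mul trmxK.
subst z_s.
have ys0 : ys != 0 by apply: contra z0 => /eqP ->; rewrite mulmx0.
have gy : g0^T *m ys = 0.
  by rewrite -bTS -mulmxA bz.
have Hy : H *m ys = lam_s *: ys.
  have h1 : (H - lam_s%:M) *m (H - lam_s%:M) *m ys = 0.
    move: zeq; rewrite shift2 -(mulmxA (b0 A C b)) bz mulmx0 scaler0 => h.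
    by rewrite -[X in X = 0]mul1mx -S1S -mulmxA h mulmx0.
  have h2 : (H - lam_s%:M) *m ys = 0.
    apply: dot_eq0; rewrite trmx_dot sym_shift // mulmxA h1 dotC dot0r //.
  by move/eqP: h2; rewrite mulmxBl mul_scalar_mx subr_eq0 => /eqP.
have key' : forall (w : 'cV[R]_(n - m)) nu, H *m w = nu *: w -> dot w g0 != 0 ->
    exists l, l < nu /\ exists2 y : 'cV[R]_(n - m), y != 0 & Nm H g0 c l *m y = 0.
  by move=> w nu Hw; apply: key.
have G2 : forall u : 'cV[R]_(n - m), H *m u = lam_s *: u -> g0^T *m u = 0.
  move=> u Hu; apply/eqP; rewrite mx11_eq0 -[(_ *m _) 0 0]/(dot g0 u) dotC.
  apply/negPn/negP => dnz.
  have [l [llt [y y0 Ny]]] := key' u lam_s Hu dnz.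
  by have := lower l y y0 Ny; rewrite leNgt llt.
split => //.
- split.
    apply/eigenvalueP; exists ys^T; last by rewrite trmx_eq0.
    by rewrite -[H]sH -trmx_mul Hy linearZ.
  move=> mu /eigenvalueP [v vH v0].
  have Hw : H *m v^T = mu *: v^T by rewrite -[H]sH -trmx_mul vH linearZ.
  rewrite leNgt; apply/negP => lt.
  have [dz|dnz] := eqVneq (dot v^T g0) 0.
    have : lam_s <= mu.
      apply: (lower mu v^T); first by rewrite trmx_eq0.
      have e0 : (H - mu%:M) *m v^T = 0.
        by rewrite mulmxBl Hw mul_scalar_mx subrr.
      have e1 : g0^T *m v^T = 0.
        by apply/eqP; rewrite mx11_eq0 -[(_ *m _) 0 0]/(dot g0 v^T) dotC dz.
      by rewrite /Nm mulmxBl -mulmxA e0 mulmx0 -scalemxAl -mulmxA e1 mulmx0 scaler0 subr0.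
    by rewrite leNgt lt.
  have [l [llt [y y0 Ny]]] := key' v^T mu Hw dnz.
  by have := lower l y y0 Ny; rewrite leNgt (lt_trans llt lt).
- apply/eigenvalueP; exists (S1 *m ys)^T; last by rewrite trmx_eq0.
  by rewrite -[PAP A C]sPAP -trmx_mul mulmxA HS -mulmxA Hy -scalemxAr linearZ.
- move=> v Pv.
  have HSv : H *m (S1^T *m v) = lam_s *: (S1^T *m v).
    have e : H *m (S1^T *m v) = S1^T *m (PAP A C *m v).
      by rewrite /H /PAP -/P !mulmxA SP -(mulmxA _ S1 S1^T) -PSS.
    by rewrite e Pv -scalemxAr.
  by rewrite bS trmx_mul -mulmxA G2.
Qed.
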